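(* If $H$ is a disjoint union of $n$ cycles (each of length at least $3$) having $20$ vertices in total, with adjacency matrix $A$, then the matrix $B(H)=-\frac4{15}A+I+\frac7{45}(J-I-A)$ has rank $21-n$.
   Context: $I$ is the identity matrix and $J$ the all-ones $20\times20$ matrix. *)

(* Defs.v *)
From HB Require Import structures.
From mathcomp Require Import all_boot all_order all_algebra.
Set Implicit Arguments. Unset Strict Implicit. Unset Printing Implicit Defensive.
Import Order.TTheory GRing.Theory Num.Theory.
Local Open Scope ring_scope.

(* A disjoint union of cycles on the vertex set 'I_N is given by a list [cs]
   of cycles; each cycle is a sequence of vertices c = [:: v1; ...; vk]
   whose edges are v1v2, ..., v(k-1)vk, vkv1 (cyclic successor [next c]). *)
Definition is_cycle_decomp (N : nat) (cs : seq (seq 'I_N)) : Prop :=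
  [/\ all (fun c => 3 <= size c)%N cs,
      uniq (flatten cs) &
      forall v : 'I_N, v \in flatten cs].

Definition cycles_adj (N : nat) (cs : seq (seq 'I_N)) : 'M[rat]_N :=
  \matrix_(i < N, j < N)
    (has (fun c => (i \in c) && ((j == next c i) || (i == next c j))) cs)%:R.

Definition matB (N : nat) (A : 'M[rat]_N) : 'M[rat]_N :=
  - (4%:R / 15%:R) *: A + 1%:M
  + (7%:R / 45%:R) *: (const_mx 1 - 1%:M - A).

(* Main.v *)
Require Import Defs.
From HB Require Import structures.
From mathcomp Require Import all_boot all_order all_algebra.
From mathcomp Require Import ring lra zify.
Set Implicit Arguments. Unset Strict Implicit. Unset Printing Implicit Defensive.
Import Order.TTheory GRing.Theory Num.Theory.
Local Open Scope ring_scope.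

Lemma uniq_idx_gen (T : eqType) (cs : seq (seq T)) i k v :
  uniq (flatten cs) -> (i < size cs)%N -> (k < size cs)%N ->
  v \in nth [::] cs i -> v \in nth [::] cs k -> i = k.
Proof.
elim: cs i k => [|c cs IH] [|i] [|k] //=; rewrite cat_uniq => /and3P[_ Hd Hu] Hi Hk.
- move=> H1 H2; case/negP: Hd; apply/hasP; exists v => //.
  by apply/flattenP; exists (nth [::] cs k) => //; rewrite mem_nth.
- move=> H1 H2; case/negP: Hd; apply/hasP; exists v => //.
  by apply/flattenP; exists (nth [::] cs i) => //; rewrite mem_nth.
- by move=> H1 H2; congr S; apply: IH.
Qed.

Lemma uniq_in_flatten (T : eqType) (cs : seq (seq T)) c :
  uniq (flatten cs) -> c \in cs -> uniq c.
Proof.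
elim: cs => [|d cs IH] //=; rewrite cat_uniq inE => /and3P[Ud _ Hu] /orP[/eqP->//|].
exact: IH.
Qed.

Lemma next_nth_mod (T : eqType) (c : seq T) x0 k : uniq c -> (k < size c)%N ->
  next c (nth x0 c k) = nth x0 c (k.+1 %% size c).
Proof.
move=> Uc Hk; rewrite next_nth mem_nth // index_uniq //.
case: c Uc Hk => [|y p] //= Uc Hk.
case: (ltnP k (size p)) => Hkp.
  by rewrite modn_small //= (set_nth_default x0).
have -> : k = size p by apply/eqP; rewrite eqn_leq Hkp -ltnS Hk.
by rewrite modnn /= nth_default.
Qed.

Section Cyc.
Variable cs : seq (seq 'I_20).
Hypothesis Hall : all (fun c => 3 <= size c)%N cs.
Hypothesis Huniq : uniq (flatten cs).
Hypothesis Hcov : forall v : 'I_20, v \in flatten cs.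

Definition idx (v : 'I_20) := find (fun c => v \in c) cs.
Definition cyc v := nth [::] cs (idx v).
Definition s v := next (cyc v) v.

Lemma has_v v : has (fun c => v \in c) cs.
Proof. by case/flattenP: (Hcov v) => c Hc Hv; apply/hasP; exists c. Qed.

Lemma idx_lt v : (idx v < size cs)%N.
Proof. by rewrite -has_find has_v. Qed.

Lemma mem_cyc v : v \in cyc v.
Proof. exact: (nth_find [::] (has_v v)). Qed.

Lemma idx_uniq v k : (k < size cs)%N -> v \in nth [::] cs k -> k = idx v.
Proof. move=> Hk Hv; apply: (uniq_idx_gen Huniq Hk (idx_lt v) Hv (mem_cyc v)). Qed.

Lemma size_nth k : (k < size cs)%N -> (3 <= size (nth [::] cs k))%N.
Proof. by move=> Hk; exact: (allP Hall) _ (mem_nth [::] Hk). Qed.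

Lemma uniq_nth k : (k < size cs)%N -> uniq (nth [::] cs k).
Proof. by move=> Hk; apply: (uniq_in_flatten Huniq); rewrite mem_nth. Qed.

Lemma uniq_cyc v : uniq (cyc v).
Proof. exact: uniq_nth (idx_lt v). Qed.

Lemma idx_in w v : w \in cyc v -> idx w = idx v.
Proof. by move=> H; symmetry; apply: idx_uniq (idx_lt v) H. Qed.

Lemma cyc_in w v : w \in cyc v -> cyc w = cyc v.
Proof. by move=> H; rewrite /cyc (idx_in H). Qed.

Lemma mem_s v : s v \in cyc v.
Proof. by rewrite mem_next mem_cyc. Qed.

Lemma cyc_s v : cyc (s v) = cyc v.
Proof. exact: cyc_in (mem_s v). Qed.

Lemma s_inj : injective s.
Proof.
move=> v w E.
have Hc : cyc v = cyc w by rewrite -cyc_s E cyc_s.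
move: E; rewrite /s Hc; exact: (can_inj (prev_next (uniq_cyc w))).
Qed.

Lemma s_nth v x0 k : (k < size (cyc v))%N ->
  s (nth x0 (cyc v) k) = nth x0 (cyc v) (k.+1 %% size (cyc v)).
Proof.
move=> Hk; rewrite /s (@cyc_in _ v (mem_nth x0 Hk)); exact: next_nth_mod (uniq_cyc v) Hk.
Qed.

Lemma size_cyc v : (3 <= size (cyc v))%N.
Proof. exact: size_nth (idx_lt v). Qed.

Lemma ss_neq v : s (s v) != v.
Proof.
have Hk : (index v (cyc v) < size (cyc v))%N by rewrite index_mem mem_cyc.
have E0 := nth_index v (mem_cyc v).
have E1 : s v = nth v (cyc v) ((index v (cyc v)).+1 %% size (cyc v)).
  by rewrite -s_nth // E0.
have Hm := size_cyc v.
have E2 : s (s v) = nth v (cyc v) (((index v (cyc v)).+1 %% size (cyc v)).+1 %% size (cyc v)).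
  by rewrite E1 s_nth // ltn_pmod //; lia.
apply/negP; rewrite E2; rewrite -[X in _ == X]E0 nth_uniq ?uniq_cyc //; last by rewrite ltn_pmod //; lia.
move: Hk Hm; set k := index v (cyc v); set m := size (cyc v) => Hk Hm.
apply/negP.
case: (ltnP k.+1 m) => Hk1.
  rewrite (modn_small Hk1); case: (ltnP k.+2 m) => Hk2.
    by rewrite (modn_small Hk2); lia.
  have -> : k.+2 = m by lia.
  by rewrite modnn; lia.
have -> : k.+1 = m by lia.
by rewrite modnn modn_small; lia.
Qed.

Lemma cyc_of c v : c \in cs -> v \in c -> c = cyc v.
Proof.
move=> Hc Hv; rewrite -(nth_index [::] Hc) /cyc; congr nth.
by apply: idx_uniq; rewrite ?index_mem ?nth_index.
Qed.

Lemma A_E i j : cycles_adj cs i j = ((j == s i) || (i == s j))%:R.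
Proof.
rewrite mxE; congr (_%:R); congr nat_of_bool; apply/idP/idP.
- case/hasP=> c Hc /andP[Hic H].
  have Ec := cyc_of Hc Hic.
  case/orP: H => H; first by rewrite /s -Ec H.
  case Hjc: (j \in c).
    by rewrite /s -(cyc_of Hc Hjc) H orbT.
  move: H; rewrite next_nth Hjc => /eqP Eij; by rewrite Eij Hjc in Hic.
- move=> H; apply/hasP; exists (cyc i); first by rewrite mem_nth // idx_lt.
  rewrite mem_cyc /=; case/orP: H => H; first by rewrite /s in H; rewrite H.
  have Hi : i \in cyc j by rewrite (eqP H) mem_s.
  by rewrite (cyc_in Hi) -/(s j) H orbT.
Qed.

Lemma A_E2 i j : cycles_adj cs i j = (j == s i)%:R + (i == s j)%:R.
Proof.
rewrite A_E; case: eqP => Hj; case: eqP => Hi //=; rewrite ?addr0 ?add0r //.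
by have := ss_neq i; rewrite -Hj -Hi eqxx.
Qed.

Lemma mem_s_nth k j : (k < size cs)%N -> (s j \in nth [::] cs k) = (j \in nth [::] cs k).
Proof.
move=> Hk; apply/idP/idP => H.
  by rewrite (idx_uniq Hk H) -/(cyc _) cyc_s mem_cyc.
by rewrite (idx_uniq Hk H) -/(cyc _) mem_s.
Qed.

Lemma orbit (x : 'I_20 -> rat) : (forall j, x (s j) = x j) ->
  forall v, x v = x (nth ord0 (cyc v) 0).
Proof.
move=> Hx v.
have Hm := size_cyc v.
suff H : forall k, (k < size (cyc v))%N -> x (nth ord0 (cyc v) k) = x (nth ord0 (cyc v) 0).
  have Hk : (index v (cyc v) < size (cyc v))%N by rewrite index_mem mem_cyc.
  by rewrite -(H _ Hk) nth_index // mem_cyc.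
elim=> [|k IH] Hk //.
rewrite -IH; last by lia.
by rewrite -[RHS]Hx s_nth ?modn_small //; lia.
Qed.


Lemma sum_delta (F : 'I_20 -> rat) j : \sum_i F i * (i == j)%:R = F j.
Proof.
rewrite (bigD1 j) //= eqxx mulr1 big1 ?addr0 // => i /negbTE ->; by rewrite mulr0.
Qed.

Lemma sumD (F G : 'I_20 -> rat) : \sum_i (F i + G i) = \sum_i F i + \sum_i G i.
Proof. exact: big_split. Qed.

Definition Mb := matB (cycles_adj cs).

Lemma M_E i j : Mb i j = 38/45 * (i == j)%:R - 19/45 * ((j == s i)%:R + (i == s j)%:R) + 7/45.
Proof. have := A_E2 i j; rewrite /Mb /matB !mxE => ->; (field; done). Qed.

Lemma xM_E (x : 'rV[rat]_20) j : (x *m Mb) 0 j =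
  38/45 * x 0 j - 19/45 * (\sum_i x 0 i * (j == s i)%:R + x 0 (s j)) + 7/45 * \sum_i x 0 i.
Proof.
rewrite mxE.
transitivity (\sum_i (38/45 * (x 0 i * (i == j)%:R) + (-19/45) * (x 0 i * (j == s i)%:R)
   + (-19/45) * (x 0 i * (i == s j)%:R) + 7/45 * x 0 i)).
  by apply: eq_bigr => i _; rewrite M_E; (field; done).
rewrite 3!sumD -!mulr_sumr !sum_delta; (field; done).
Qed.

Lemma Q_E (x : 'rV[rat]_20) : \sum_j (x *m Mb) 0 j * x 0 j =
  19/45 * \sum_j (x 0 j - x 0 (s j))^+2 + 7/45 * (\sum_j x 0 j)^+2.
Proof.
set S := \sum_j x 0 j.
have H1 : \sum_j x 0 j * (\sum_i x 0 i * (j == s i)%:R) = \sum_i x 0 i * x 0 (s i).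
  under eq_bigr do rewrite mulr_sumr.
  rewrite exchange_big; apply: eq_bigr => i _.
  transitivity (\sum_j (x 0 i * x 0 j) * (j == s i)%:R).
    by apply: eq_bigr => j _; (field; done).
  by rewrite (sum_delta (fun j => x 0 i * x 0 j)).
have H2 : \sum_j x 0 (s j) ^+ 2 = \sum_j x 0 j ^+ 2.
  by rewrite [RHS](reindex_inj s_inj).
have H3 : S ^+ 2 = \sum_j S * x 0 j by rewrite expr2 mulr_sumr.
have H4 : \sum_j (x 0 j - x 0 (s j))^+2 =
   \sum_j x 0 j ^+2 + \sum_j x 0 (s j) ^+2 + (-2) * \sum_j x 0 j * x 0 (s j).
  rewrite mulr_sumr -2!sumD; apply: eq_bigr => j _; (field; done).
transitivity (\sum_j (38/45 * x 0 j ^+2 + (-19/45) * (x 0 j * \sum_i x 0 i * (j == s i)%:R)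
   + (-19/45) * (x 0 j * x 0 (s j)) + 7/45 * (S * x 0 j))).
  by apply: eq_bigr => j _; rewrite xM_E -/S; (field; done).
rewrite 3!sumD -!mulr_sumr H1 -/S H4 H2; (field; done).
Qed.

Lemma kerM (x : 'rV[rat]_20) :
  (x <= kermx Mb)%MS <-> (forall j, x 0 (s j) = x 0 j) /\ \sum_j x 0 j = 0.
Proof.
rewrite sub_kermx; split.
- move/eqP => H0.
  have HQ : \sum_j (x *m Mb) 0 j * x 0 j = 0 by apply: big1 => j _; rewrite H0 mxE mul0r.
  rewrite Q_E in HQ.
  have Ha : 0 <= \sum_j (x 0 j - x 0 (s j))^+2 by apply: sumr_ge0 => j _; exact: sqr_ge0.
  have Hb : 0 <= (\sum_j x 0 j)^+2 by exact: sqr_ge0.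
  have Ea : \sum_j (x 0 j - x 0 (s j))^+2 = 0 by lra.
  have Eb : (\sum_j x 0 j)^+2 = 0 by lra.
  split; last by apply/eqP; rewrite -sqrf_eq0 Eb.
  move=> j; have := psumr_eq0P (fun j _ => sqr_ge0 (x 0 j - x 0 (s j))) Ea (i:=j) isT.
  by move/eqP; rewrite sqrf_eq0 subr_eq0 => /eqP ->.
- case=> Hx HS; apply/eqP/rowP => j; rewrite xM_E mxE HS.
  have -> : \sum_i x 0 i * (j == s i)%:R = x 0 j.
    transitivity (\sum_i x 0 (s i) * (j == s i)%:R).
      by apply: eq_bigr => i _; rewrite Hx.
    transitivity (\sum_k x 0 k * (j == k)%:R); first by rewrite [RHS](reindex_inj s_inj).
    rewrite -(sum_delta (fun k => x 0 k) j); apply: eq_bigr => i _; by rewrite eq_sym.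
  rewrite Hx; (field; done).
Qed.

Definition U : 'M[rat]_(size cs, 20) := \matrix_(k, j) (j \in nth [::] cs k)%:R.
Definition hd (k : nat) := nth ord0 (nth [::] cs k) 0.

Lemma hd_mem k : (k < size cs)%N -> hd k \in nth [::] cs k.
Proof. by move=> Hk; rewrite mem_nth // (leq_trans _ (size_nth Hk)). Qed.

Lemma subU (x : 'rV[rat]_20) : (x <= U)%MS <-> (forall j, x 0 (s j) = x 0 j).
Proof.
split.
- case/submxP => D -> j; rewrite !mxE; apply: eq_bigr => k _; rewrite !mxE mem_s_nth //.
- move=> Hx; apply/submxP; exists (\row_k x 0 (hd k)); apply/rowP => j; rewrite !mxE.
  rewrite (bigD1 (Ordinal (idx_lt j))) //= big1 ?addr0.
  + rewrite !mxE -/(cyc j) mem_cyc mulr1.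
    exact: (orbit (x := fun v => x 0 v)) Hx j.
  + move=> k Hk; rewrite !mxE; case Hj: (j \in nth [::] cs k); last by rewrite mulr0.
    case/negP: Hk; apply/eqP/val_inj => /=; exact: idx_uniq (ltn_ord k) Hj.
Qed.

Lemma rankU : \rank U = size cs.
Proof.
apply/eqP; rewrite eqn_leq rank_leq_row /=.
pose V : 'M[rat]_(20, size cs) := \matrix_(j, k) (j == hd k)%:R.
have UV : U *m V = 1%:M.
  apply/matrixP => k k'; rewrite !mxE.
  rewrite (bigD1 (hd k')) //= big1 ?addr0.
  + rewrite !mxE eqxx mulr1; congr (_%:R); congr nat_of_bool.
    have Hh := hd_mem (ltn_ord k').
    apply/idP/eqP => [H|->//].
    have E1 := idx_uniq (ltn_ord k) H; have E2 := idx_uniq (ltn_ord k') Hh.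
    by apply/eqP; rewrite -val_eqE /= E1 -E2.
  + by move=> j /negbTE Hj; rewrite !mxE Hj mulr0.
by have := mxrankM_maxl U V; rewrite UV mxrank1.
Qed.

Definition J : 'M[rat]_20 := const_mx 1.

Lemma kerJ (x : 'rV[rat]_20) : (x <= kermx J)%MS <-> \sum_j x 0 j = 0.
Proof.
rewrite sub_kermx; split.
- move/eqP/rowP/(_ ord0); rewrite !mxE => H; rewrite -[RHS]H.
  by apply: eq_bigr => i _; rewrite /J mxE mulr1.
- move=> H; apply/eqP/rowP => j; rewrite !mxE -[RHS]H.
  by apply: eq_bigr => i _; rewrite /J mxE mulr1.
Qed.

Lemma rankJ : \rank J = 1%N.
Proof.
have -> : J = (const_mx 1 : 'cV[rat]_20) *m (const_mx 1 : 'rV[rat]_20).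
  by apply/matrixP => i j; rewrite !mxE big_ord1 !mxE mulr1.
apply/eqP; rewrite eqn_leq (leq_trans (mxrankM_maxr _ _)) ?rank_leq_row //= lt0n mxrank_eq0.
apply/eqP => /matrixP/(_ ord0 ord0); rewrite !mxE big_ord1 !mxE mulr1.
by move/eqP; rewrite oner_eq0.
Qed.

Lemma rank_main : \rank Mb = (21 - size cs)%N.
Proof.
have n_pos : (0 < size cs)%N by have := idx_lt ord0; lia.
pose KJ := kermx J.
have rKJ : \rank KJ = 19%N by rewrite mxrank_ker rankJ.
have sum20 : \rank (U + KJ)%MS = 20%N.
  have Hs : (KJ <= U + KJ)%MS := addsmxSr U KJ.
  case: (mxrank_leqif_sup Hs) => Hle Heq.
  have Hneq : \rank KJ != \rank (U + KJ)%MS.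
    rewrite Heq addsmx_sub submx_refl andbT; apply/negP => HU.
    have Hr : (row (Ordinal n_pos) U <= KJ)%MS := submx_trans (row_sub _ _) HU.
    move/kerJ: Hr => Hsum.
    have Hge : forall j : 'I_20, true -> 0 <= row (Ordinal n_pos) U 0 j.
      by move=> j _; rewrite !mxE ler0n.
    have := psumr_eq0P Hge Hsum (i := hd 0) isT.
    by rewrite !mxE (hd_mem n_pos) => /eqP; rewrite oner_eq0.
  have := rank_leq_col (U + KJ)%MS; move: Hle Hneq; rewrite rKJ; lia.
have cap : \rank (U :&: KJ)%MS = (size cs).-1.
  have := mxrank_sum_cap U KJ; rewrite sum20 rankU rKJ; lia.
have Eker : \rank (kermx Mb) = \rank (U :&: KJ)%MS.
  apply/eqP; rewrite eqn_leq; apply/andP; split; apply: mxrankS.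
  - apply/row_subP => i; rewrite sub_capmx.
    have /kerM [Hx HS] := row_sub i (kermx Mb).
    by apply/andP; split; [apply/subU | apply/kerJ].
  - apply/row_subP => i; have Hr := row_sub i (U :&: KJ)%MS.
    rewrite sub_capmx in Hr; case/andP: Hr => /subU Hx /kerJ HS.
    by apply/kerM; split.
have := mxrank_ker Mb; rewrite Eker cap; have := rank_leq_col Mb; lia.
Qed.

End Cyc.

Theorem mainTheorem15 (n : nat) (cs : seq (seq 'I_20)) :
  size cs = n -> is_cycle_decomp cs ->
  \rank (matB (cycles_adj cs)) = (21 - n)%N.
Proof. by move=> <- [Ha Hu Hc]; exact: rank_main Ha Hu Hc. Qed.
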